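(* Let $P$ and $S$ be strings over a totally ordered alphabet and let $q\ge 0$ be an integer such that both $P$ and $S$ have length at least $q+1$. Assume that $\mathcal{PP}_P(i)=\mathcal{PP}_S(i)$ for all $1\le i\le q$, i.e. $P[1..q]$ and $S[1..q]$ have the same prefix-parent representations. Then $P[1..q+1]$ and $S[1..q+1]$ have the same prefix-parent representations (i.e. additionally $\mathcal{PP}_P(q+1)=\mathcal{PP}_S(q+1)$) if and only if $$S[\mathcal{PP}_P(q+1)] \preceq S[q+1] \preceq S[\mathcal{PC}_P(q+1)].$$
   Context: A string $S$ is a finite sequence $S[1],S[2],\dots$ over an alphabet $\Sigma$ with a total order $<$; $S[i..j]$ denotes the substring $S[i]S[i+1]\cdots S[j]$ (empty if $i>j$). For positions $i,j$ of $S$, write $S[i]\prec S[j]$ iff either $S[i]<S[j]$, or $S[i]$ and $S[j]$ have the same value and $i<j$; write $S[i]\preceq S[j]$ iff $S[i]\prec S[j]$ or $i=j$. Minimum elements are taken with respect to $\prec$ (so among equal minimal values the leftmost position is the minimum). Prefix-parent representation: $\mathcal{PP}_S(i)=\max\{j: 1\le j<i,\ S[j]\prec S[i]\}$ if such $j$ exists, and $\mathcal{PP}_S(i)=i$ otherwise. Prefix-child representation: $\mathcal{PC}_S(1)=1$, and for $i\ge 2$: if $\mathcal{PP}_S(i)=i$, then $\mathcal{PC}_S(i)$ is the index $j\in[1,i-1]$ such that $S[j]$ is the minimum of $S[1..i-1]$; if $\mathcal{PP}_S(i)=i-1$, then $\mathcal{PC}_S(i)=i$; if $\mathcal{PP}_S(i)<i-1$,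 then $\mathcal{PC}_S(i)$ is the index $j$ with $\mathcal{PP}_S(i)<j<i$ such that $S[j]$ is the minimum of $S[\mathcal{PP}_S(i)+1..i-1]$. *)

(* Defs.v *)
(* Strings are sequences over a totally ordered alphabet
   T : orderType d, indexed from 1: S[i] = nth x0 S (i-1).  The default x0
   is irrelevant for in-range positions. *)
From HB Require Import structures.
From mathcomp Require Import all_boot all_order.
Set Implicit Arguments. Unset Strict Implicit. Unset Printing Implicit Defensive.
Import Order.TTheory.
Local Open Scope order_scope.

Section Strings.
Context {d : Order.disp_t} {T : orderType d} (x0 : T).

Definition chr (S : seq T) (i : nat) : T := nth x0 S i.-1.

Definition prec (S : seq T) (i j : nat) : bool :=
  (chr S i < chr S j) || ((chr S i == chr S j) && (i < j)%N).

Definition preceq (S : seq T) (i j : nat) : bool := prec S i j || (i == j).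

Definition PP (S : seq T) (i : nat) : nat :=
  let m := \max_(1 <= j < i | prec S j i) j in
  if m == 0%N then i else m.

(* index of the ≺-minimum of S[a..b] (for a <= b) *)
Definition minpos (S : seq T) (a b : nat) : nat :=
  foldl (fun m k => if prec S k m then k else m) a (iota a.+1 (b - a)).

Definition PC (S : seq T) (i : nat) : nat :=
  if (i <= 1)%N then 1%N
  else if PP S i == i then minpos S 1 i.-1
  else if PP S i == i.-1 then i
  else minpos S (PP S i).+1 i.-1.

End Strings.

(* Main.v *)
Require Import Defs.
From HB Require Import structures.
From mathcomp Require Import all_boot all_order.
Import Order.TTheory.
Set Implicit Arguments. Unset Strict Implicit.

Section Aux.
Context {d : Order.disp_t} {T : orderType d} (x0 : T) (S : seq T).

Local Notation prec := (prec x0 S).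
Local Notation preceq := (preceq x0 S).
Local Notation PP := (PP x0 S).

Lemma prec_trans i j k : prec i j -> prec j k -> prec i k.
Proof.
rewrite /prec => /orP[xy | /andP[/eqP exy ij]] /orP[yz | /andP[/eqP eyz jk]].
- by rewrite (lt_trans xy yz).
- by rewrite -eyz xy.
- by rewrite exy yz.
- by rewrite exy eyz eqxx (ltn_trans ij jk) orbT.
Qed.

Lemma prec_asym i j : prec i j -> ~~ prec j i.
Proof.
rewrite /prec => /orP[xy | /andP[/eqP exy ij]].
- by rewrite negb_or (lt_gtF xy) eq_sym (lt_eqF xy).
- by rewrite exy ltxx eqxx /= -leqNgt ltnW.
Qed.

Lemma prec_total i j : i != j -> ~~ prec j i -> prec i j.
Proof.
rewrite /prec => nij; case: (ltgtP (chr x0 S i) (chr x0 S j)) => //= e.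
idtac. rewrite /= -leqNgt leq_eqVlt => /orP[/eqP E|->//].
by rewrite E eqxx in nij.
Qed.

Lemma preceq_prec i j k : preceq i j -> prec j k -> prec i k.
Proof. by rewrite /preceq => /orP[h|/eqP->] //; apply: prec_trans. Qed.

Lemma prec_preceq i j k : prec i j -> preceq j k -> prec i k.
Proof. by rewrite /preceq => h /orP[h2|/eqP<-] //; apply: prec_trans h h2. Qed.

Definition mx i := \max_(1 <= j < i | prec j i) j.

Lemma mx_ub i j : (1 <= j < i)%N -> prec j i -> (j <= mx i)%N.
Proof.
move=> hj pj; apply: (bigmaxn_sup_seq j) => //.
by rewrite mem_index_iota.
Qed.

Lemma mx_cases i : mx i = 0 \/ ((1 <= mx i < i)%N /\ prec (mx i) i).
Proof.
have : (mx i == 0) || [&& (1 <= mx i < i)%N & prec (mx i) i].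
  rewrite /mx big_seq_cond.
  apply: (big_ind (fun x => (x == 0) || [&& (1 <= x < i)%N & prec x i])).
  - by rewrite eqxx.
  - move=> x y hx hy; case: (leqP x y) => h.
    + by [].
    + by [].
  - by move=> j /andP[]; rewrite mem_index_iota => -> ->; rewrite orbT.
by case/orP=> [/eqP|/andP[/andP[a b] c]]; [left|right; rewrite a b c].
Qed.

Lemma PP_cases i :
  (PP i = i /\ forall j, (1 <= j < i)%N -> ~~ prec j i) \/
  ((1 <= PP i < i)%N /\ prec (PP i) i /\
   forall j, (PP i < j < i)%N -> ~~ prec j i).
Proof.
rewrite /Defs.PP -/(mx i).
case: (mx_cases i) => [e|[h1 h2]].
- rewrite e eqxx; left; split => // j hj; apply/negP => pj.
  by move: (mx_ub hj pj); rewrite e leqn0 => /eqP j0; move: hj; rewrite j0.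
- have -> : (mx i == 0) = false by case/andP: h1; case: (mx i).
  right; split => //; split => // j /andP[a b]; apply/negP => pj.
  have hj : (1 <= j < i)%N.
    by rewrite b andbT; case/andP: h1 => h _; exact: leq_trans h (ltnW a).
  by move: (mx_ub hj pj); rewrite leqNgt a.
Qed.

Lemma PP_ge i j : (1 <= j < i)%N -> prec j i -> (j <= PP i < i)%N.
Proof.
move=> hj pj; case: (PP_cases i) => [[_ h]|[h1 [_ h3]]].
  by move: (h _ hj); rewrite pj.
rewrite (proj2 (andP h1)) andbT leqNgt; apply/negP => lt.
by move: (h3 j); rewrite lt (proj2 (andP hj)) pj => /(_ isT).
Qed.

Lemma L2 a c : (a < c)%N ->
  (forall j, (a < j < c)%N -> prec c j) <-> ((PP c == c) || (PP c <= a)%N).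
Proof.
move=> ac; split.
- move=> H; case: (PP_cases c) => [[-> _]|[h1 [h2 h3]]]; first by rewrite eqxx.
  apply/orP; right; rewrite leqNgt; apply/negP => lt.
  have := H _ (introT andP (conj lt (proj2 (andP h1)))).
  by move/prec_asym; rewrite h2.
- move=> H j /andP[aj jc]; apply: prec_total.
    by rewrite neq_ltn jc orbT.
  apply/negP => pj.
  have /andP[a1 a2] := PP_ge (introT andP (conj (leq_ltn_trans (leq0n a) aj) jc)) pj.
  move: H; rewrite (ltn_eqF a2) /= leqNgt (leq_trans aj a1).
  done.
Qed.

Lemma L1a p b : (1 <= p)%N -> (forall j, (p < j <= b)%N -> prec p j) ->
  forall j, (p < j <= b)%N -> (p <= PP j < j)%N.
Proof.
move=> p1 H j /andP[a b']; apply: PP_ge; last by apply: H; rewrite a b'.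
by rewrite p1 a.
Qed.

Lemma L1b p b : (forall j, (p < j <= b)%N -> (p <= PP j < j)%N) ->
  forall j, (p < j <= b)%N -> prec p j.
Proof.
move=> H n; elim: n {-2}n (leqnn n) => [|n IH] j jn hj.
  by move: hj; rewrite leqn0 in jn; rewrite (eqP jn).
have /andP[h1 h2] := H _ hj.
case: (PP_cases j) => [[e _]|[_ [pk _]]]; first by rewrite e ltnn in h2.
move: h1; rewrite leq_eqVlt => /orP[/eqP e|lt]; first by rewrite e.
apply: prec_trans pk; apply: IH.
  by rewrite -ltnS (leq_trans h2 jn).
by rewrite lt (leq_trans (ltnW h2)) //; case/andP: hj.
Qed.

Lemma minpos_spec a b : (a <= b)%N ->
  (a <= minpos x0 S a b <= b)%N /\
  forall k, (a <= k <= b)%N -> preceq (minpos x0 S a b) k.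
Proof.
move=> ab; rewrite /minpos.
suff: forall n s m, (a <= m < s)%N -> (forall k, (a <= k < s)%N -> preceq m k) ->
  let r := foldl (fun m k => if prec k m then k else m) m (iota s n) in
  (a <= r < s + n)%N /\ forall k, (a <= k < s + n)%N -> preceq r k.
  move=> /(_ (b - a) a.+1 a); rewrite leqnn ltnSn addSn subnKC //= => /(_ isT).
  case.
    move=> k /andP[h1 h2]; have -> : k = a by apply/eqP; rewrite eqn_leq h1 -ltnS h2.
    by rewrite /Defs.preceq eqxx orbT.
  by move=> h1 h2; split; [rewrite -ltnS | move=> k hk; apply: h2; rewrite ltnS].
elim=> [|n IH] s m hm Hm /=; first by rewrite addn0.
rewrite addnS -addSn; apply: IH.
- case: ifP => _; last by rewrite (ltn_trans (proj2 (andP hm))) ?ltnSn ?andbT; case/andP: hm.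
  by rewrite ltnSn andbT; case/andP: hm => am ms; rewrite (leq_trans am (ltnW ms)).
- move=> k /andP[ak]; rewrite ltnS leq_eqVlt => /orP[/eqP->|ks].
  + case: ifP => h; first by rewrite /Defs.preceq eqxx orbT.
    rewrite /Defs.preceq; apply/orP; left; apply: prec_total; last by rewrite h.
    by rewrite neq_ltn (proj2 (andP hm)).
  + case: ifP => h; last by apply: Hm; rewrite ak.
    rewrite /Defs.preceq; apply/orP; left; apply: prec_preceq h _.
    by apply: Hm; rewrite ak.
Qed.

End Aux.

Theorem theorem1 (d : Order.disp_t) (T : orderType d) (x0 : T)
    (P S : seq T) (q : nat) :
  (q.+1 <= size P)%N -> (q.+1 <= size S)%N ->
  (forall i, (1 <= i <= q)%N -> PP x0 P i = PP x0 S i) ->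
  ((forall i, (1 <= i <= q.+1)%N -> PP x0 P i = PP x0 S i) <->
   (preceq x0 S (PP x0 P q.+1) q.+1 && preceq x0 S q.+1 (PC x0 P q.+1))).
Proof.
move=> _ _ H.
have red : (forall i, (1 <= i <= q.+1)%N -> PP x0 P i = PP x0 S i) <->
    PP x0 P q.+1 = PP x0 S q.+1.
  split; first by move=> h; apply: h; rewrite leqnn andbT.
  move=> e i /andP[i1]; rewrite leq_eqVlt => /orP[/eqP->//|].
  by rewrite ltnS => iq; apply: H; rewrite i1 iq.
apply: (iff_trans red).
have tr1 : forall m, (1 <= m)%N -> (m <= q)%N ->
    (forall j, (m < j <= q)%N -> prec x0 P m j) ->
    forall j, (m < j <= q)%N -> prec x0 S m j.
  move=> m m1 mq hP; apply: L1b => j hj; rewrite -H; first exact: (L1a m1 hP hj).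
  by case/andP: hj => a b; rewrite b (leq_trans m1 (ltnW a)).
have tr2 : forall a c, (a < c)%N -> (c <= q)%N ->
    (forall j, (a < j < c)%N -> prec x0 P c j) ->
    forall j, (a < j < c)%N -> prec x0 S c j.
  move=> a c ac cq hP; apply/(L2 _ _ ac); rewrite -H; first exact/(L2 _ _ ac).
  by rewrite cq (leq_ltn_trans (leq0n a) ac).
have smin : forall a c, (a < c)%N -> (c <= q)%N ->
    (forall k, (a < k <= q)%N -> preceq x0 P c k) ->
    forall k, (a < k <= q)%N -> preceq x0 S c k.
  move=> a c ac cq hP k /andP[ak kq].
  case: (ltngtP k c) => [kc|ck|->]; last by rewrite /Defs.preceq eqxx orbT.
  - apply/orP; left; apply: (tr2 a c) => //; last by rewrite ak kc.
    move=> j /andP[aj jc]; apply: prec_total; first by rewrite neq_ltn jc orbT.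
    apply: prec_asym.
    have := hP j; rewrite aj (leq_trans (ltnW jc) cq) /Defs.preceq (gtn_eqF jc) orbF.
    by move=> /(_ isT).
  - apply/orP; left; apply: (tr1 c) => //; last by rewrite ck kq.
      by rewrite (leq_ltn_trans (leq0n a) ac).
    move=> j /andP[cj jq]; have := hP j.
    by rewrite jq (ltn_trans ac cj) /Defs.preceq (ltn_eqF cj) orbF => /(_ isT).
case: (PP_cases x0 P q.+1) => [[eP allP]|[h1 [h2 h3]]].
- rewrite eP; case: (posnP q) => [q0|qpos].
  + subst q; rewrite /PC /= /Defs.preceq eqxx !orbT; split => // _.
    case: (PP_cases x0 S 1) => [[-> _] //|[h _]].
    by case/andP: h => a b; rewrite ltnS leqn0 in b; rewrite (eqP b) in a.
  + have ePC : PC x0 P q.+1 = minpos x0 P 1 q.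
      rewrite /PC (_ : (q.+1 <= 1)%N = false); last by rewrite ltnS leqNgt qpos.
      by rewrite eP eqxx.
    rewrite ePC.
    have [/andP[m1 mq] mP] := minpos_spec x0 P qpos.
    set m := minpos x0 P 1 q in m1 mq mP *.
    have mS := smin 0 m m1 mq mP.
    rewrite /Defs.preceq eqxx orbT /= (@gtn_eqF m q.+1 mq) orbF.
    split.
    * move=> e; case: (PP_cases x0 S q.+1) => [[_ hall]|[h1' _]].
        apply: prec_total; first by rewrite gtn_eqF.
        by apply: hall; rewrite m1 ltnS mq.
      by rewrite -e ltnn andbF in h1'.
    * move=> pm; case: (PP_cases x0 S q.+1) => [[-> _] //|[h1' [h2' _]]].
      have := prec_asym (preceq_prec (mS _ h1') h2'); by rewrite pm.
- move: (h1) => /andP[p1]; rewrite ltnS leq_eqVlt => /orP[/eqP pq|pq].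
  + rewrite /PC (_ : (q.+1 <= 1)%N = false); last by rewrite ltnS leqNgt -pq p1.
    rewrite pq (ltn_eqF (ltnSn q)) /= eqxx.
    rewrite /Defs.preceq (ltn_eqF (ltnSn q)) orbF eqxx orbT andbT.
    rewrite pq in p1 h2.
    split.
    * move=> e; case: (PP_cases x0 S q.+1) => [[e' _]|[_ [h2' _]]].
        by move: e; rewrite e' => /eqP; rewrite ltn_eqF.
      by rewrite -e in h2'.
    * move=> pr; have /andP[a b] := @PP_ge d T x0 S q.+1 q (introT andP (conj p1 (ltnSn q))) pr.
      by apply/eqP; rewrite eqn_leq a -ltnS b.
  + have q1 : (0 < q)%N by rewrite (leq_ltn_trans (leq0n _) pq).
    rewrite /PC (_ : (q.+1 <= 1)%N = false); last by rewrite ltnS leqNgt q1.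
    rewrite (ltn_eqF (proj2 (andP h1))) (ltn_eqF pq) /=.
    have [/andP[c1 cq] cP] := minpos_spec x0 P pq.
    set c := minpos x0 P (PP x0 P q.+1).+1 q in c1 cq cP *.
    have cS := smin _ c c1 cq cP.
    rewrite /Defs.preceq (@gtn_eqF c q.+1 cq) (ltn_eqF (proj2 (andP h1))) !orbF.
    split.
    * move=> e; case: (PP_cases x0 S q.+1) => [[e' _]|[_ [h2' h3']]].
        by move: (proj2 (andP h1)); rewrite e e' ltnn.
      rewrite -e in h2' h3'; rewrite h2' /=.
      apply: prec_total; first by rewrite gtn_eqF.
      by apply: h3'; rewrite c1.
    * move=> /andP[pr cr].
      have /andP[a b] := @PP_ge d T x0 S q.+1 _ h1 pr.
      case: (PP_cases x0 S q.+1) => [[e' _]|[_ [h2' _]]].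
        by rewrite e' ltnn in b.
      apply/eqP; rewrite eqn_leq a /= leqNgt; apply/negP => lt.
      have := prec_asym (preceq_prec (cS _ (introT andP (conj lt b))) h2').
      by rewrite cr.
Qed.
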